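(* Let $D=C_1\cup\dots\cup C_k$ be a cycle of spheres in a smooth oriented 4-manifold $X$, with self-intersection numbers $s_i=[C_i]\cdot[C_i]$ and length $r(D)=k$. Then: (1) at most three components of $D$ are homologous in $X$, and there are three homologous components only if $r(D)=3$; (2) there is a pair of homologous components only if $r(D)\le 4$; (3) if $[C_i]=[C_{i+1}]$ for some $i$, then either $r(D)=3$ and $s_i=s_{i+1}=1$, or $r(D)=2$ and $s_i=s_{i+1}=2$.
   Context: A cycle of spheres is a union $D=C_1\cup\dots\cup C_k$, $k\ge2$, of closed embedded oriented smooth spheres in $X$, cyclically labelled (indices mod $k$), intersecting transversally and positively with no triple points, such that for $k\ge3$ each $C_i$ meets exactly $C_{i-1}$ and $C_{i+1}$, each in one point, and for $k=2$ the spheres $C_1,C_2$ meet in exactly two points. Homology classes are taken in $H_2(X;\mathbb{Z})$. *)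

(* Defs.v *)
From mathcomp Require Import all_boot all_order all_algebra.
Set Implicit Arguments. Unset Strict Implicit. Unset Printing Implicit Defensive.
Import GRing.Theory.

(* Homological model of a cycle of spheres D = C_1 u ... u C_k (indices in 'I_k,
   i.e. taken mod k; [ordS i] is the cyclic successor i+1 mod k).

   [cycle_meet k i j] is the number of (transverse, positive) intersection points
   of C_i and C_j for i <> j, as prescribed by the definition of a cycle of spheres:
   - k = 2 : C_1 and C_2 meet in exactly two points;
   - k >= 3: C_i meets exactly C_{i-1} and C_{i+1}, each in one point,
             and is disjoint from the other components. *)
Definition cycle_meet (k : nat) (i j : 'I_k) : nat :=
  if k == 2 then 2
  else if (j == ordS i) || (i == ordS j) then 1 else 0.

Definition intersection_form (H : zmodType) (form : H -> H -> int) : Prop :=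
  (forall x y : H, form x y = form y x) /\
  (forall x y z : H, form (x + y)%R z = (form x z + form y z)%R).

(* Main.v *)
Require Import Defs.
From mathcomp Require Import all_boot all_order all_algebra zify.
Definition sc k a := if a.+1 == k then 0 else a.+1.
Definition pc k a := if a == 0 then k.-1 else a.-1.
Definition adj k a b := (b == sc k a) || (a == sc k b).
Lemma scE k a : a < k -> (a.+1 < k /\ sc k a = a.+1) \/ (a.+1 = k /\ sc k a = 0).
Proof. rewrite /sc; case: (a.+1 =P k) => ? ?; lia. Qed.
Lemma pcE k a : a < k -> (a = 0 /\ pc k a = k.-1) \/ (0 < a /\ pc k a = a.-1).
Proof. rewrite /pc; case: (a =P 0) => ? ?; lia. Qed.
Lemma sc_pc k a : a < k -> sc k (pc k a) = a.
Proof. rewrite /sc /pc; case: (a =P 0) => ?; case: eqP => ? ?; lia. Qed.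
Lemma adjP k a b : adj k a b -> b = sc k a \/ a = sc k b.
Proof. by rewrite /adj => /orP [/eqP|/eqP]; auto. Qed.
Lemma adj_sc k a : adj k a (sc k a).
Proof. by rewrite /adj eqxx. Qed.
Lemma adj_pc k a : a < k -> adj k a (pc k a).
Proof. by move=> ak; rewrite /adj sc_pc // eqxx orbT. Qed.
Lemma comb k i j: 3<=k -> i<k -> j<k -> i != j ->
 (forall l, l < k -> l != i -> l != j -> adj k i l = adj k j l) ->
 k = 3 \/ (k=4 /\ (j = i+2 \/ i = j+2)).
Proof.
move=> k3 ik jk ij H.
have [x1 e1] : exists x1, sc k i = x1 by eexists.
have [x2 e2] : exists x2, sc k j = x2 by eexists.
have [p ep] : exists p, pc k i = p by eexists.
have hx1 := scE k i ik; rewrite e1 in hx1.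
have hx2 := scE k j jk; rewrite e2 in hx2.
have hp := pcE k i ik; rewrite ep in hp.
have x1k : x1 < k by lia.
have [x3 e3] : exists x3, sc k x1 = x3 by eexists.
have hx3 := scE k x1 x1k; rewrite e3 in hx3.
have spi : sc k p = i by rewrite -ep sc_pc.
have F1 : x1 = j \/ x1 = x2 \/ j = x3.
  case: (x1 =P j) => [|n1]; first by left.
  have n2 : x1 != i by apply/eqP; lia.
  have n3 : x1 != j by apply/eqP.
  have := H x1 x1k n2 n3; rewrite -{1}e1 adj_sc => /esym /adjP.
  rewrite e2 e3; lia.
have pk : p < k by lia.
have F2 : p = j \/ p = x2 \/ j = i.
  case: (p =P j) => [|n1]; first by left.
  have n2 : p != i by apply/eqP; lia.
  have n3 : p != j by apply/eqP.
  have := H p pk n2 n3; rewrite -{1}ep adj_pc // => /esym /adjP.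
  rewrite e2 spi; lia.
lia.
Qed.

Lemma sc_val k (i : 'I_k) : val (ordS i) = sc k i.
Proof.
rewrite /= /sc; case: (i.+1 =P k) => [->|ne]; first by rewrite modnn.
rewrite modn_small //; have := ltn_ord i; lia.
Qed.

Lemma sc_val' k (i : 'I_k) : nat_of_ord (ordS i) = sc k i.
Proof. exact: sc_val. Qed.

Lemma meetE k (i l : 'I_k) : k != 2 ->
  cycle_meet i l = if adj k i l then 1 else 0.
Proof.
move=> /negbTE k2; rewrite /cycle_meet k2 /adj -!sc_val.
by rewrite !val_eqE.
Qed.

Lemma neqv k (i j : 'I_k) : i != j -> nat_of_ord i <> nat_of_ord j.
Proof. by move=> /eqP ij /val_inj. Qed.

Section S.
Variables (H : zmodType) (form : H -> H -> int) (k : nat) (C : 'I_k -> H).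
Hypothesis hmeet : forall i j : 'I_k, i != j -> form (C i) (C j) = Posz (cycle_meet i j).

Lemma pair_eq (i j : 'I_k) : i != j -> C i = C j ->
  forall l : 'I_k, l != i -> l != j -> cycle_meet i l = cycle_meet j l.
Proof.
move=> ij Cij l li lj.
have h1 : form (C i) (C l) = Posz (cycle_meet i l) by apply: hmeet; rewrite eq_sym.
have h2 : form (C j) (C l) = Posz (cycle_meet j l) by apply: hmeet; rewrite eq_sym.
rewrite Cij h2 in h1. by case: h1.
Qed.

Lemma pair_comb (i j : 'I_k) : 3 <= k -> i != j -> C i = C j ->
  k = 3 \/ (k = 4 /\ (nat_of_ord j = i + 2 \/ nat_of_ord i = j + 2)).
Proof.
move=> k3 ij Cij; apply: comb => //.
move=> l lk li lj.
have k2 : k != 2%N by apply/eqP; lia.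
have := @pair_eq i j ij Cij (Ordinal lk) li lj.
rewrite !meetE //=.
by case: (adj k i l); case: (adj k j l).
Qed.
End S.

Local Open Scope ring_scope.

Theorem lemma2p5 (H : zmodType) (form : H -> H -> int)
  (hform : intersection_form form)
  (k : nat) (hk : (2 <= k)%N) (C : 'I_k -> H)
  (hmeet : forall i j : 'I_k, i != j -> form (C i) (C j) = (cycle_meet i j)%:Z) :
  (* (1) at most three components are homologous ... *)
  (~ exists i j l m : 'I_k,
       [/\ uniq [:: i; j; l; m], C i = C j, C i = C l & C i = C m]) /\
  (* ... and three homologous components only if r(D) = 3 *)
  (forall i j l : 'I_k, uniq [:: i; j; l] -> C i = C j -> C i = C l -> k = 3%N) /\
  (* (2) a pair of homologous components only if r(D) <= 4 *)
  (forall i j : 'I_k, i != j -> C i = C j -> (k <= 4)%N) /\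
  (* (3) [C_i] = [C_{i+1}] forces r(D) = 3, s_i = s_{i+1} = 1 or r(D) = 2, s_i = s_{i+1} = 2 *)
  (forall i : 'I_k, C i = C (ordS i) ->
     (k = 3%N /\ form (C i) (C i) = 1 /\ form (C (ordS i)) (C (ordS i)) = 1) \/
     (k = 2%N /\ form (C i) (C i) = 2 /\ form (C (ordS i)) (C (ordS i)) = 2)).
Proof.
have P1b : forall i j l : 'I_k, uniq [:: i; j; l] -> C i = C j -> C i = C l -> k = 3%N.
  move=> i j l u Cij Cil.
  move: u; rewrite /= !inE !negb_or => /and3P [/andP [ij il] jl _].
  have := ltn_ord i; have := ltn_ord j; have := ltn_ord l.
  have := neqv _ _ _ ij; have := neqv _ _ _ il; have := neqv _ _ _ jl.
  case: (leqP 3%N k) => [k3|]; last by lia.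
  have Cjl : C j = C l by rewrite -Cij.
  have := @pair_comb _ _ _ _ hmeet _ _ k3 ij Cij; have := @pair_comb _ _ _ _ hmeet _ _ k3 il Cil;
  have := @pair_comb _ _ _ _ hmeet _ _ k3 jl Cjl; lia.
split.
  move=> [i [j [l [m [u Cij Cil Cim]]]]].
  move: (u); rewrite /= !inE !negb_or => /and4P [/and3P [ij il im] /andP [jl jm] lm _].
  have k3 : k = 3%N.
    apply: (P1b i j l) => //; by rewrite /= !inE !negb_or ij il jl.
  have := ltn_ord i; have := ltn_ord j; have := ltn_ord l; have := ltn_ord m.
  have := neqv _ _ _ ij; have := neqv _ _ _ il; have := neqv _ _ _ jl; have := neqv _ _ _ im;
  have := neqv _ _ _ jm; have := neqv _ _ _ lm; lia.
split; first exact: P1b.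
split.
  move=> i j ij Cij; case: (leqP k 4%N) => // k4.
  have k3 : (3 <= k)%N by lia.
  have := @pair_comb _ _ _ _ hmeet _ _ k3 ij Cij; lia.
move=> i Cio.
have ik := ltn_ord i.
have hs := scE k i ik.
have io : i != ordS i by apply/eqP => /(f_equal (@nat_of_ord k)); rewrite sc_val'; lia.
have F : form (C i) (C i) = (cycle_meet i (ordS i))%:Z by rewrite {2}Cio hmeet.
have F' : form (C (ordS i)) (C (ordS i)) = (cycle_meet i (ordS i))%:Z by rewrite -Cio.
rewrite F' F /cycle_meet eqxx /=.
case: (k =P 2) => [k2|k2]; first by right.
left; split => //.
have k3 : (3 <= k)%N by lia.
have := @pair_comb _ _ _ _ hmeet _ _ k3 io Cio; rewrite sc_val'; lia.
Qed.
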